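(* Let $q\in\Bbbk$ be arbitrary, let $M$ be any left $\mathcal H_n(q)$-module, and let the subspaces $U_1,\dots,U_{n-1}$ of $M$ be defined either by $U_i=\operatorname{Ker}(T_i-q)_M$ for all $i$, or by $U_i=\operatorname{Im}(T_i+1)_M$ for all $i$. For $0\le i<n$ put $$x_i=\sum_{\sigma\in\mathcal D_i}T_\sigma,\qquad y_i=\sum_{\sigma\in\mathcal D_i^\triangledown}(-1)^{\ell(\sigma)}q^{\,n-1-i-\ell(\sigma)}T_\sigma,$$ where $\mathcal D_i=\{e,\tau_i,\tau_{i-1}\tau_i,\dots,\tau_1\tau_2\cdots\tau_i\}$ and $\mathcal D_i^\triangledown=\{e,\tau_{i+1},\tau_{i+1}\tau_{i+2},\dots,\tau_{i+1}\tau_{i+2}\cdots\tau_{n-1}\}$. Then (i) $x_i$ maps $\Upsilon_i$ into $\Upsilon_{i+1}$ and $y_i$ maps $\Sigma_i$ into $\Sigma_{i+1}$; (ii) the element $x_iy_i$ induces a linear map $s_i:K_i\to K_{i+1}$ of the components of the complex $K_\bullet(M;(U_i))$; (iii) $\partial_{i+1}s_i+s_{i-1}\partial_i=[n]_q\,\mathrm{Id}$ on $K_i$ for $0\le i\le n$ (with $s_{-1}=0$, $s_n=0$, $\partial_0=0$, $\partial_{n+1}=0$). Consequently, if $[n]_q=1+q+\dots+q^{n-1}\neq0$, the complex $K_\bullet(M;(U_i))$ is exact.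
   Context: $\mathcal H_n(q)$ is the Hecke algebra over a field $\Bbbk$ with generators $T_1,\dots,T_{n-1}$, braid relations and $(T_i-q)(T_i+1)=0$ (here $q=0$ is allowed), with standard basis $T_\sigma$, $\sigma\in\mathfrak S_n$ ($T_e=1$, $T_{\tau_i\sigma}=T_iT_\sigma$ when $\ell(\tau_i\sigma)>\ell(\sigma)$, $\tau_i=(i,i+1)$). For $x\in\mathcal H_n$, $x_M$ denotes the operator by which $x$ acts on $M$. Given subspaces $U_1,\dots,U_{n-1}$ of a vector space $M$, the complex $K_\bullet(M;(U_i))$: $0\to K_n\to\dots\to K_i\xrightarrow{\partial_i}K_{i-1}\to\dots\to K_0\to0$ has $K_i=\Upsilon_i/(\Upsilon_i\cap\Sigma_i)$ for $0\le i\le n$, where $\Upsilon_i=\bigcap_{j<i}U_j$, $\Sigma_i=\sum_{j>i}U_j$ (with $\Upsilon_0=\Upsilon_1=M$ and $\Sigma_{n-1}=\Sigma_n=0$), and differentials induced by the inclusions $\Upsilon_i\subset\Upsilon_{i-1}$, $\Sigma_i\subset\Sigma_{i-1}$. *)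

(* Defs.v *)
From HB Require Import structures.
From mathcomp Require Import all_boot all_order all_algebra.
Set Implicit Arguments. Unset Strict Implicit. Unset Printing Implicit Defensive.
Import Order.TTheory GRing.Theory Num.Theory.
Local Open Scope ring_scope.

Definition is_Hecke_module (k : fieldType) (M : lmodType k) (n : nat) (q : k)
    (T : nat -> {linear M -> M}) : Prop :=
  (forall i (m : M), (1 <= i < n)%N -> T i (T i m) = (q - 1) *: T i m + q *: m)
  /\ (forall i (m : M), (1 <= i)%N -> (i.+1 < n)%N ->
        T i (T i.+1 (T i m)) = T i.+1 (T i (T i.+1 m)))
  /\ (forall i j (m : M), (1 <= i < n)%N -> (1 <= j < n)%N -> (i.+1 < j)%N ->
        T i (T j m) = T j (T i m)).

(* Action of T_{tau_{s1} tau_{s2} ... tau_{sr}} = T_{s1} T_{s2} ... T_{sr}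
   (the words used below are reduced, so this is T_sigma). *)
Definition word_act (k : fieldType) (M : lmodType k) (T : nat -> {linear M -> M})
    (s : seq nat) (m : M) : M := foldr (fun j v => T j v) m s.

(* x_i = sum_{sigma in D_i} T_sigma, D_i = {tau_a tau_{a+1} ... tau_i : 1 <= a <= i+1}
   (a = i+1 gives e). *)
Definition x_act (k : fieldType) (M : lmodType k) (T : nat -> {linear M -> M})
    (i : nat) (m : M) : M :=
  \sum_(1 <= a < i.+2) word_act T (iota a (i.+1 - a)) m.

(* y_i = sum_{sigma in D_i^v} (-1)^l(sigma) q^(n-1-i-l(sigma)) T_sigma,
   sigma = tau_{i+1} ... tau_{i+r}, 0 <= r <= n-1-i, l(sigma) = r. *)
Definition y_act (k : fieldType) (M : lmodType k) (n : nat) (q : k)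
    (T : nat -> {linear M -> M}) (i : nat) (m : M) : M :=
  \sum_(r < n - i) (((-1) ^+ r * q ^+ (n - 1 - i - r)) *: word_act T (iota i.+1 r) m).

Definition qint (k : fieldType) (n : nat) (q : k) : k := \sum_(r < n) q ^+ r.

Definition Upsilon (k : fieldType) (M : lmodType k) (U : nat -> M -> Prop)
    (i : nat) (m : M) : Prop :=
  forall j, (1 <= j < i)%N -> U j m.

Definition Sigma (k : fieldType) (M : lmodType k) (n : nat) (U : nat -> M -> Prop)
    (i : nat) (m : M) : Prop :=
  exists f : nat -> M, (forall j, (i < j < n)%N -> U j (f j))
                       /\ m = \sum_(i.+1 <= j < n) f j.

(* Main.v *)
Require Import Defs.
From HB Require Import structures.
From mathcomp Require Import all_boot all_order all_algebra zify ring.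
Import Order.TTheory GRing.Theory Num.Theory.
Local Open Scope ring_scope.

Section Main.
Variables (k : fieldType) (M : lmodType k) (n : nat) (q : k)
    (T : nat -> {linear M -> M}) (U : nat -> M -> Prop).

Definition lin (A : M -> M) :=
  (forall u v, A (u + v) = A u + A v) /\ (forall c u, A (c *: u) = c *: A u).

Lemma lin0 A : lin A -> A 0 = 0.
Proof. by move=> [_ h]; have := h 0 0; rewrite !scale0r. Qed.

Lemma linB A : lin A -> forall u v, A (u - v) = A u - A v.
Proof.
move=> hA u v; case: (hA) => hD hZ.
by rewrite hD -scaleN1r hZ scaleN1r.
Qed.

Lemma lin_sum A (hA : lin A) (a b : nat) (F : nat -> M) :
  A (\sum_(a <= i < b) F i) = \sum_(a <= i < b) A (F i).
Proof. by apply: (big_morph A); [exact: hA.1 | exact: lin0]. Qed.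

Lemma lin_sumo A (hA : lin A) (b : nat) (F : 'I_b -> M) :
  A (\sum_(i < b) F i) = \sum_(i < b) A (F i).
Proof. by apply: (big_morph A); [exact: hA.1 | exact: lin0]. Qed.

Lemma linT j : lin (T j).
Proof. by split=> *; rewrite ?linearD ?linearZ. Qed.

Lemma lin_word s : lin (word_act T s).
Proof.
elim: s => [|j s [hD hZ]] /=; first by split.
by split=> *; rewrite /word_act /= -/(word_act T s _) ?hD ?hZ ?linearD ?linearZ.
Qed.

Lemma word_cons j s v : word_act T (j :: s) v = T j (word_act T s v).
Proof. by []. Qed.

Lemma word_cat s1 s2 v : word_act T (s1 ++ s2) v = word_act T s1 (word_act T s2 v).
Proof. by rewrite /word_act foldr_cat. Qed.

Lemma lin_sumf (a b : nat) (F : nat -> M -> M) :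
  (forall i, lin (F i)) -> lin (fun v => \sum_(a <= i < b) F i v).
Proof.
move=> hF; split=> [u v|c u]; first by rewrite -big_split /=; apply: eq_bigr => i _; rewrite (hF i).1.
by rewrite scaler_sumr; apply: eq_bigr => i _; rewrite (hF i).2.
Qed.

Lemma lin_sumfo (b : nat) (F : 'I_b -> M -> M) :
  (forall i, lin (F i)) -> lin (fun v => \sum_(i < b) F i v).
Proof.
move=> hF; split=> [u v|c u]; first by rewrite -big_split /=; apply: eq_bigr => i _; rewrite (hF i).1.
by rewrite scaler_sumr; apply: eq_bigr => i _; rewrite (hF i).2.
Qed.

Lemma lin_x i : lin (x_act T i).
Proof. by apply: lin_sumf => a; exact: lin_word. Qed.

Lemma lin_y i : lin (y_act n q T i).
Proof.
apply: lin_sumfo => r; case: (lin_word (iota i.+1 r)) => hD hZ.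
by split=> [u v|c u]; rewrite ?hD ?hZ ?scalerDr // !scalerA mulrC.
Qed.


Hypothesis HQ : forall i m, (1 <= i < n)%N -> T i (T i m) = (q - 1) *: T i m + q *: m.
Hypothesis HBr : forall i m, (1 <= i)%N -> (i.+1 < n)%N ->
        T i (T i.+1 (T i m)) = T i.+1 (T i (T i.+1 m)).
Hypothesis HC : forall i j m, (1 <= i < n)%N -> (1 <= j < n)%N -> (i.+1 < j)%N ->
        T i (T j m) = T j (T i m).

Lemma word_comm s j v : (1 <= j < n)%N ->
  all (fun kk => (1 <= kk < n) && ((kk.+1 < j) || (j.+1 < kk)))%N s ->
  word_act T s (T j v) = T j (word_act T s v).
Proof.
move=> hj; elim: s => [|kk s IH] //= /andP[/andP[hk /orP[h|h]] hs].
  rewrite -/(word_act T s _) IH //; exact: HC.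
rewrite -/(word_act T s _) IH //; symmetry; exact: HC.
Qed.

Lemma all_iota (P : nat -> bool) a L : (forall k, (a <= k < a + L)%N -> P k) -> all P (iota a L).
Proof. by move=> h; apply/allP => x; rewrite mem_iota; apply: h. Qed.

Lemma word_inter L b j v : (1 <= b)%N -> (b + L <= n)%N -> (b <= j)%N -> (j.+1 < b + L)%N ->
  word_act T (iota b L) (T j v) = T j.+1 (word_act T (iota b L) v).
Proof.
elim: L b => [|L IH] b h1 h2 h3 h4; first by lia.
rewrite /= -!/(word_act T _ _).
case: (ltngtP b j) => hbj; last first.
- subst j; case: L IH h2 h4 => [|L] IH h2 h4; first by lia.
  rewrite /= -!/(word_act T _ _) word_comm; last first.
  + by apply: all_iota => x hx; apply/andP; split; lia.
  + by lia.
  by rewrite HBr //; lia.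
- by lia.
rewrite IH; try lia.
by rewrite HC //; lia.
Qed.


Hypothesis U0 : forall j, U j 0.
Hypothesis Uadd : forall j a b, U j a -> U j b -> U j (a + b).
Hypothesis Uscl : forall j c a, U j a -> U j (c *: a).
Hypothesis Uint : forall A a b, lin A -> (forall v, A (T a v) = T b (A v)) ->
  forall u, U a u -> U b (A u).
Hypothesis Uim : forall j v, (1 <= j < n)%N -> U j (T j v + v).
Hypothesis Uker : forall j u, (1 <= j < n)%N -> U j u -> T j u = q *: u.

Lemma U_sum j a b F : (forall i, (a <= i < b)%N -> U j (F i)) -> U j (\sum_(a <= i < b) F i).
Proof.
move=> h; rewrite big_nat_cond; apply: big_ind => //; first exact: Uadd.
by move=> i /andP[hi _]; apply: h.
Qed.

Local Notation Ups := (Upsilon U).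
Local Notation Sig := (Sigma n U).

Lemma Ups_sub i m : Ups i.+1 m -> Ups i m.
Proof. by move=> h j hj; apply: h; lia. Qed.

Lemma Ups0 i : Ups i 0.
Proof. by move=> j _. Qed.

Lemma UpsD i a b : Ups i a -> Ups i b -> Ups i (a + b).
Proof. by move=> ha hb j hj; apply: Uadd; [apply: ha | apply: hb]. Qed.

Lemma UpsZ i c a : Ups i a -> Ups i (c *: a).
Proof. by move=> ha j hj; apply: Uscl; apply: ha. Qed.

Lemma UpsB i a b : Ups i a -> Ups i b -> Ups i (a - b).
Proof. by move=> ha hb; apply: UpsD => //; rewrite -scaleN1r; apply: UpsZ. Qed.

Lemma Sig0 i : Sig i 0.
Proof. by exists (fun _ => 0); split => [j _|]; [apply: U0 | rewrite big1]. Qed.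

Lemma SigD i a b : Sig i a -> Sig i b -> Sig i (a + b).
Proof.
move=> [f [hf ->]] [g [hg ->]]; exists (fun j => f j + g j); split.
  by move=> j hj; apply: Uadd; [apply: hf | apply: hg].
by rewrite big_split.
Qed.

Lemma SigZ i c a : Sig i a -> Sig i (c *: a).
Proof.
move=> [f [hf ->]]; exists (fun j => c *: f j); split.
  by move=> j hj; apply: Uscl; apply: hf.
by rewrite scaler_sumr.
Qed.

Lemma SigB i a b : Sig i a -> Sig i b -> Sig i (a - b).
Proof. by move=> ha hb; apply: SigD => //; rewrite -scaleN1r; apply: SigZ. Qed.

Lemma Sig_sum i a b F : (forall j, (a <= j < b)%N -> Sig i (F j)) -> Sig i (\sum_(a <= j < b) F j).
Proof.
move=> h; rewrite big_nat_cond; apply: big_ind => //; first exact: Sig0.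
  exact: SigD.
by move=> j /andP[hj _]; apply: h.
Qed.

Lemma Sig_U i j u : (i < j < n)%N -> U j u -> Sig i u.
Proof.
move=> hj hu; exists (fun l => if l == j then u else 0); split.
  by move=> l hl; case: eqP => [->|] //.
rewrite -big_mkcond big_nat1_eq; case: ifP => //; lia.
Qed.

Lemma Sig_mono i m : Sig i.+1 m -> Sig i m.
Proof.
move=> [f [hf ->]]; apply: Sig_sum => j hj; apply: (@Sig_U _ j); first lia.
by apply: hf; lia.
Qed.


Lemma x_Ups i m : (i < n)%N -> Ups i m -> Ups i.+1 (x_act T i m).
Proof.
move=> hi hm j /andP[hj1 hj2]; rewrite /x_act (big_cat_nat _ (n:=j)) //=; last lia.
rewrite (@big_ltn _ _ _ j); last lia.
rewrite (@big_ltn _ _ _ j.+1); last lia.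
apply: Uadd; last rewrite addrA; last apply: Uadd.
- apply: U_sum => a ha.
  apply: (@Uint _ j.-1 j (lin_word _)).
    move=> v; have {2}-> : j = j.-1.+1 by lia.
    by apply: word_inter; lia.
  by apply: hm; lia.
- have -> : (i.+1 - j = (i.+1 - j.+1).+1)%N by lia.
  by rewrite word_cons; apply: Uim; lia.
- apply: U_sum => a ha.
  apply: (@Uint _ j j (lin_word _)); last by apply: hm; lia.
  move=> v; apply: word_comm; first lia.
  by apply: all_iota => x hx; apply/andP; split; lia.
Qed.

Lemma x_comm i j v : (1 <= j < n)%N -> (i.+1 < j)%N ->
  x_act T i (T j v) = T j (x_act T i v).
Proof.
move=> hj hij; rewrite /x_act linear_sum; apply: eq_big_nat => a ha.
apply: word_comm => //; apply: all_iota => x hx; apply/andP; split; lia.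
Qed.

Lemma x_Sig i v : Sig i.+1 v -> Sig i.+1 (x_act T i v).
Proof.
move=> [f [hf ->]]; rewrite (@lin_sum _ (lin_x i)); apply: Sig_sum => j hj.
apply: (@Sig_U _ j) => //; apply: (@Uint _ j j (lin_x _)); last by apply: hf.
by move=> w; apply: x_comm; lia.
Qed.


Lemma y_comm i j v : (i < n)%N -> (1 <= j)%N -> (j < i)%N ->
  y_act n q T i (T j v) = T j (y_act n q T i v).
Proof.
move=> hin hj hji; rewrite /y_act linear_sum; apply: eq_bigr => r _.
rewrite linearZ; congr (_ *: _); apply: word_comm; first lia.
by apply: all_iota => x hx; apply/andP; split; have := ltn_ord r; lia.
Qed.

Lemma y_Ups i m : (i < n)%N -> Ups i m -> Ups i (y_act n q T i m).
Proof.
move=> hin hm j /andP[hj1 hj2]; apply: (@Uint _ j j (lin_y _)); last by apply: hm; lia.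
by move=> v; apply: y_comm.
Qed.

Lemma y_U i j u : (i < j < n)%N -> U j u -> Sig i.+1 (y_act n q T i u).
Proof.
move=> /andP[hij hjn] hu; rewrite /y_act.
rewrite -(big_mkord xpredT (fun r => ((-1) ^+ r * q ^+ (n - 1 - i - r)) *: word_act T (iota i.+1 r) u)).
set r0 := (j - i.+1)%N.
rewrite (big_cat_nat _ (n:=r0)) //=; last lia.
rewrite (@big_ltn _ _ _ r0); last lia.
rewrite (@big_ltn _ _ _ r0.+1); last lia.
apply: SigD; last rewrite addrA; last apply: SigD.
- apply: Sig_sum => r hr; apply: (@Sig_U _ j); first lia.
  apply: Uscl; apply: (@Uint _ j j (lin_word _)) => // v.
  apply: word_comm; first lia.
  by apply: all_iota => x hx; apply/andP; split; lia.
- have -> : iota i.+1 r0.+1 = iota i.+1 r0 ++ [:: j].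
    by rewrite -[r0.+1]addn1 iotaD /=; congr (_ ++ [:: _]); rewrite /r0; lia.
  rewrite word_cat /= Uker //; last by lia.
  rewrite (lin_word _).2 scalerA -scalerDl.
  have -> : ((n - 1 - i - r0) = (n - 1 - i - r0.+1).+1)%N by lia.
  rewrite !exprS.
  match goal with |- Sig _ ((?c) *: _) => have -> : c = 0 by ring end.
  rewrite scale0r.
  exact: Sig0.
- apply: Sig_sum => r hr; apply: (@Sig_U _ j.+1); first lia.
  apply: Uscl; apply: (@Uint _ j j.+1 (lin_word _)) => // v.
  by apply: word_inter; lia.
Qed.

Lemma y_Sig i m : Sig i m -> Sig i.+1 (y_act n q T i m).
Proof.
move=> [f [hf ->]]; rewrite (@lin_sum _ (lin_y i)); apply: Sig_sum => j hj.
have hj' : (i < j < n)%N by case/andP: hj => *; apply/andP; split; lia.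
exact: (@y_U i j (f j) hj' (hf j hj')).
Qed.


Lemma qintS j : qint j.+1 q = qint j q + q ^+ j.
Proof. by rewrite /qint big_ord_recr. Qed.

Lemma qintS' j : qint j.+1 q = 1 + q * qint j q.
Proof.
rewrite /qint big_ord_recl expr0 mulr_sumr; congr (_ + _); apply: eq_bigr => r _.
by rewrite exprS.
Qed.

Lemma qint_split a b : qint (a + b) q = qint a q + q ^+ a * qint b q.
Proof.
rewrite /qint big_split_ord mulr_sumr /=; congr (_ + _); apply: eq_bigr => r _.
by rewrite exprD.
Qed.

Lemma x0 v : x_act T 0 v = v.
Proof. by rewrite /x_act big_nat1. Qed.

Lemma XR i v : x_act T i.+1 v = v + x_act T i (T i.+1 v).
Proof.
rewrite /x_act big_nat_recr //= subnn addrC; congr (_ + _).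
apply: eq_big_nat => a ha.
have -> : (i.+2 - a = (i.+1 - a) + 1)%N by lia.
rewrite iotaD word_cat /=; congr (word_act _ _ (T _ _)); lia.
Qed.

Lemma XQ i m : (i < n)%N -> Ups i.+1 m -> x_act T i m = qint i.+1 q *: m.
Proof.
elim: i m => [|i IH] m hi hm; first by rewrite x0 /qint big_ord1 expr0 scale1r.
rewrite XR Uker; [| lia | by apply: hm; lia].
rewrite (lin_x i).2 IH; [|lia|exact: Ups_sub].
by rewrite scalerA [qint i.+2 q]qintS' scalerDl scale1r.
Qed.

Definition cY i r v := ((-1) ^+ r * q ^+ (n - 1 - i - r)) *: word_act T (iota i.+1 r) v.

Lemma y_nat i v : y_act n q T i v = \sum_(0 <= r < n - i) cY i r v.
Proof. by rewrite big_mkord. Qed.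

Lemma YR i v : (i < n)%N ->
  y_act n q T i v = q ^+ (n - i.+1) *: v - T i.+1 (y_act n q T i.+1 v).
Proof.
move=> hi; rewrite !y_nat.
have -> : (n - i = (n - i.+1).+1)%N by lia.
rewrite big_nat_recl // linear_sum -sumrN; congr (_ + _).
  by rewrite /cY expr0 mul1r subn0 /=; congr (_ ^+ _ *: _); lia.
apply: eq_bigr => r _; rewrite /cY /= linearZ -scaleNr; congr (_ *: _).
rewrite exprS mulN1r mulNr; congr (- (_ * _ ^+ _)); lia.
Qed.


Lemma zm1 (a b c d : M) : a - b - (c + a) = (d - c) - (b + d).
Proof.
rewrite (addrC c a) (addrC b d) !opprD !addrA (addrAC a) subrr add0r.
by rewrite (addrAC d) subrr add0r addrC.
Qed.

Lemma zm2 (y a b c : M) : (y + a) + (b - a) - (c + b) = y - c.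
Proof.
by rewrite opprD !addrA (addrAC (y + a)) addrK (addrAC y) addrK.
Qed.

Lemma yn v : y_act n q T n v = 0.
Proof. by rewrite /y_act subnn big_ord0. Qed.

Lemma YS i v : (i < n)%N -> Sig i (y_act n q T i v - qint (n - i) q *: v).
Proof.
move=> hi; have [d hd] : exists d, (i + d.+1 = n)%N by exists (n - i.+1)%N; lia.
elim: d i hd {hi} v => [|d IH] i hd v.
  rewrite YR; last lia.
  have -> : i.+1 = n by lia.
  rewrite yn linear0 subr0 subnn expr0 scale1r.
  have -> : (n - i = 1)%N by lia.
  by rewrite /qint big_ord1 expr0 scale1r subrr; apply: Sig0.
rewrite YR; last lia.
have -> : (n - i = (n - i.+1).+1)%N by lia.
rewrite qintS scalerDl.
rewrite (zm1 _ _ _ (y_act n q T i.+1 v)).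
apply: SigB; first by apply: Sig_mono; apply: IH; lia.
by apply: (@Sig_U _ i.+1); [lia | apply: Uim; lia].
Qed.

Lemma Xid i m : (i < n)%N -> Ups i m ->
  x_act T i (y_act n q T i m) + (if (0 < i)%N then x_act T i.-1 (y_act n q T i.-1 m) else 0)
   - qint n q *: m = y_act n q T i m - qint (n - i) q *: m.
Proof.
case: i => [|j] hi hm; first by rewrite x0 addr0 subn0.
rewrite /= XR (@YR j m); last lia.
rewrite (@linB _ (lin_x j)) (lin_x j).2 (@XQ j m) //; last lia.
have -> : qint n q = qint ((n - j.+1) + j.+1) q by congr (qint _ q); lia.
rewrite qint_split scalerA scalerDl.
exact: zm2.
Qed.


Definition sfun i m := if (i < n)%N then x_act T i (y_act n q T i m) else 0.

Lemma s_Ups i m : Ups i m -> Ups i.+1 (sfun i m).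
Proof.
rewrite /sfun; case: ifP => hi hm; last exact: Ups0.
by apply: x_Ups => //; apply: y_Ups.
Qed.

Lemma s_Sig i m : Sig i m -> Sig i.+1 (sfun i m).
Proof.
rewrite /sfun; case: ifP => hi hm; last exact: Sig0.
by apply: x_Sig; apply: y_Sig.
Qed.

Lemma part3 i m : (0 < n)%N -> (i <= n)%N -> Ups i m ->
  let d := sfun i m + (if (0 < i)%N then sfun i.-1 m else 0) - qint n q *: m in
  Ups i d /\ Sig i d.
Proof.
move=> hn hi hm d.
case: (ltnP i n) => hin.
  have -> : d = y_act n q T i m - qint (n - i) q *: m.
    rewrite /d /sfun hin -(@Xid i m hin hm); congr (_ + _ - _).
    by case: ifP => // h0; rewrite ifT //; lia.
  split; last exact: YS.
  by apply: UpsB; [apply: y_Ups | apply: UpsZ].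
have ein : i = n by lia.
subst i.
have -> : d = 0.
  rewrite /d /sfun ltnn add0r ifT // ifT; last lia.
  have e1 : n.-1.+1 = n by lia.
  rewrite (@YR n.-1 m); last lia.
  rewrite e1 yn linear0 subr0 subnn expr0 scale1r XQ; [|lia|by rewrite e1].
  by rewrite e1 subrr.
by split; [apply: Ups0 | apply: Sig0].
Qed.

Lemma zm3 (c : k) (m s t : M) : c != 0 -> m - c^-1 *: s = c^-1 *: (t - (s + t - c *: m)).
Proof.
move=> hc; rewrite opprB (addrC s t) opprD addrCA addNKr scalerBr scalerA mulVf //.
by rewrite scale1r.
Qed.


Lemma main_sec : (0 < n)%N ->
  let x := x_act T in
  let y := y_act n q T in
  let Up := Upsilon U in
  let Sg := Sigma n U in
  let s := fun (i : nat) (m : M) => if (i < n)%N then x i (y i m) else 0 in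
  (forall i m, (i < n)%N ->
     (Up i m -> Up i.+1 (x i m)) /\ (Sg i m -> Sg i.+1 (y i m))) /\
  (forall i m, (i < n)%N ->
     (Up i m -> Up i.+1 (x i (y i m))) /\
     (Up i m -> Sg i m -> Up i.+1 (x i (y i m)) /\ Sg i.+1 (x i (y i m)))) /\
  (forall i m, (i <= n)%N -> Up i m ->
     let d := s i m + (if (0 < i)%N then s i.-1 m else 0) - qint n q *: m in
     Up i d /\ Sg i d) /\
  (qint n q != 0 ->
   forall i m, (i <= n)%N -> Up i m -> ((0 < i)%N -> Sg i.-1 m) ->
     exists m', ((i < n)%N \/ m' = 0) /\ Up i.+1 m' /\
                Up i (m - m') /\ Sg i (m - m')).
Proof.
move=> hn x y Up Sg s.
split; [|split; [|split]].
- move=> i m hi; split; [exact: x_Ups | exact: y_Sig].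
- move=> i m hi; split=> [hm|hm hsg].
    by apply: x_Ups => //; apply: y_Ups.
  by split; [apply: x_Ups => //; apply: y_Ups | apply: x_Sig; apply: y_Sig].
- move=> i m hi hm; exact (@part3 i m hn hi hm).
move=> hQ i m hi hm hsg.
have es : forall j, s j m = sfun j m by [].
exists ((qint n q)^-1 *: sfun i m); split; [|split].
- case: (ltnP i n) => hin; first by left.
  by right; rewrite /sfun ifF ?scaler0 //; apply/negbTE; rewrite -leqNgt.
- by apply: UpsZ; apply: s_Ups.
have [h1 h2] := @part3 i m hn hi hm.
set t := (if (0 < i)%N then sfun i.-1 m else 0).
have [t1 t2] : Ups i t /\ Sig i t.
  rewrite /t; case: ifP => h0; last by split; [apply: Ups0 | apply: Sig0].
  have e : i.-1.+1 = i by lia.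
  rewrite -{1 3}e; split; first by apply: s_Ups; apply: Ups_sub; rewrite e.
  by apply: s_Sig; apply: hsg.
rewrite (@zm3 _ m (sfun i m) t hQ); split.
  by apply: UpsZ; apply: UpsB.
by apply: SigZ; apply: SigB.
Qed.

End Main.

Theorem lemma2p1 (k : fieldType) (M : lmodType k) (n : nat) (q : k)
    (T : nat -> {linear M -> M}) (U : nat -> M -> Prop) :
  (0 < n)%N ->
  is_Hecke_module n q T ->
  ((forall i m, U i m <-> T i m = q *: m) \/
   (forall i m, U i m <-> exists v, m = T i v + v)) ->
  let x := x_act T in
  let y := y_act n q T in
  let Ups := Upsilon U in
  let Sig := Sigma n U in
  let s := fun (i : nat) (m : M) => if (i < n)%N then x i (y i m) else 0 in
  (forall i m, (i < n)%N ->
     (Ups i m -> Ups i.+1 (x i m)) /\ (Sig i m -> Sig i.+1 (y i m))) /\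
  (forall i m, (i < n)%N ->
     (Ups i m -> Ups i.+1 (x i (y i m))) /\
     (Ups i m -> Sig i m -> Ups i.+1 (x i (y i m)) /\ Sig i.+1 (x i (y i m)))) /\
  (forall i m, (i <= n)%N -> Ups i m ->
     let d := s i m + (if (0 < i)%N then s i.-1 m else 0) - qint n q *: m in
     Ups i d /\ Sig i d) /\
  (qint n q != 0 ->
   forall i m, (i <= n)%N -> Ups i m -> ((0 < i)%N -> Sig i.-1 m) ->
     exists m', ((i < n)%N \/ m' = 0) /\ Ups i.+1 m' /\
                Ups i (m - m') /\ Sig i (m - m')).
Proof.
move=> hn [HQ [HBr HC]] hU.
have Tq : forall j v, (1 <= j < n)%N -> T j (T j v + v) = q *: (T j v + v).
  move=> j v hj; rewrite linearD HQ // scalerBl scale1r scalerDr.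
  by rewrite addrAC addrNK.
case: hU => hU.
- refine (@main_sec _ _ _ _ _ U HBr HC _ _ _ _ _ _ hn).
  + by move=> j; apply/hU; rewrite linear0 scaler0.
  + by move=> j a b /hU ha /hU hb; apply/hU; rewrite linearD ha hb scalerDr.
  + by move=> j c a /hU ha; apply/hU; rewrite linearZZ ha !scalerA mulrC.
  + move=> A a b [hD hZ] hA u /hU hu; apply/hU; rewrite -hA hu hZ //.
  + by move=> j v hj; apply/hU; apply: Tq.
  + by move=> j u hj /hU.
- refine (@main_sec _ _ _ _ _ U HBr HC _ _ _ _ _ _ hn).
  + by move=> j; apply/hU; exists 0; rewrite linear0 addr0.
  + move=> j a b /hU [va ->] /hU [vb ->]; apply/hU; exists (va + vb).
    by rewrite linearD addrACA.
  + move=> j c a /hU [va ->]; apply/hU; exists (c *: va).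
    by rewrite linearZ scalerDr.
  + move=> A a b [hD hZ] hA u /hU [v ->]; apply/hU; exists (A v).
    by rewrite hD hA.
  + by move=> j v hj; apply/hU; exists v.
  + by move=> j u hj /hU [v ->]; apply: Tq.
Qed.
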